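(* Let $\epsilon_1>0$, $n\ge1$, let $u$ be a utility function on contexts of sensitivity $\Delta u\le1$ (context population size or overlap with a fixed starting context, $-\infty$ on non-matching contexts), and let $C_V$ be a starting context with $f_M(D_{C_V},V)=\mathrm{true}$. Consider the Depth-First Search Sampling algorithm: initialize a stack containing $C_V$ and $\mathrm{Visited}=\emptyset$; while $|\mathrm{Visited}|\le n$ and the stack is nonempty: let $C$ be the top of the stack, add $C$ to $\mathrm{Visited}$, let $\mathrm{Ch}$ be the set of contexts connected to $C$ that are matching for $V$ and not in $\mathrm{Visited}$; if $\mathrm{Ch}=\emptyset$ pop the stack, otherwise push $\mathrm{Exp}^{\epsilon_1}_u(D,\mathrm{Ch})$ onto the stack. Finally output $\mathrm{Exp}^{\epsilon_1}_u(D,\mathrm{Visited})$. Then this algorithm satisfies $((2n+2)\epsilon_1,\ COE_M(\cdot,V))$-Output Constrained Differential Privacy.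
   Context: Dataset $D$ over categorical attributes $A_1,\dots,A_m$ (domain sizes $|A_i|$, all possible values) and metric attribute $M$; $t=\sum_i|A_i|$. A context is a binary vector of length $t$, $c_{ij}=1$ meaning the $j$-th value of $A_i$ is selected; $D_C$ is the set of tuples of $D$ whose value in every $A_i$ is selected by $C$. Two contexts are connected if their Hamming distance is $1$. $f_M(D_C,V)$ is a deterministic test of whether record $V$ is an outlier in $D_C$ w.r.t. $M$; a context is matching if this is true. $COE_M(D,V)$ is the set of contexts $C$ with $V\in D_C$ and $f_M(D_C,V)=\mathrm{true}$. Sensitivity $\Delta u=\max|u(D_1,r)-u(D_2,r)|$ over neighboring datasets (differing by adding/removing one record) and outputs $r$. $\mathrm{Exp}^{\epsilon}_u(D,\mathcal R)$ outputs $r\in\mathcal R$ with probability $\exp(\epsilon u(D,r)/(2\Delta u))/\sum_{r'\in\mathcal R}\exp(\epsilon u(D,r')/(2\Delta u))$. $D_1,D_2$ are $f$-neighbors if they differ by adding/removing one record and $f(D_1)=f(D_2)\ne\emptyset$; $\mathcal M$ satisfies $(\epsilon,f)$-Output Constrained Differential Privacy if $\Pr[\mathcal M(D_1)\in S]\le e^\epsilon\Pr[\mathcal M(D_2)\in S]$ for all $f$-neighbors and all output sets $S$. *)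

(* Defs.v *)
From mathcomp Require Import all_boot all_order all_algebra.
From mathcomp Require Import reals.
From mathcomp.analysis Require Import sequences exp.
Set Implicit Arguments. Unset Strict Implicit. Unset Printing Implicit Defensive.
Import Order.TTheory GRing.Theory Num.Theory.
Local Open Scope ring_scope.

Section DFSSampling.
Variable R : realType.
Variables (m : nat) (dom : 'I_m -> nat).

(* a record: values of A_1..A_m, and the value of the metric attribute M *)
Definition attrs := {dffun forall i : 'I_m, 'I_(dom i)}.
Definition record := (attrs * R)%type.
(* a dataset is a multiset of records, represented by a sequence up to perm_eq *)
Definition dataset := seq record.

(* positions of a context vector: pairs (i, j) = j-th value of A_i;
   there are t = sum_i |A_i| of them *)
Definition value_index := {i : 'I_m & 'I_(dom i)}.
Definition context := {ffun value_index -> bool}.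

Definition selects (C : context) (x : record) : bool :=
  [forall i : 'I_m, C (Tagged (fun i => 'I_(dom i)) (x.1 i))].

Definition restrict (D : dataset) (C : context) : dataset :=
  [seq x <- D | selects C x].

Definition connected (C1 C2 : context) : bool :=
  #|[set p | C1 p != C2 p]| == 1%N.

Definition neighbors (D1 D2 : dataset) : Prop :=
  exists x, perm_eq D2 (x :: D1) \/ perm_eq D1 (x :: D2).

Definition f_neighbors (F : dataset -> {set context}) (D1 D2 : dataset) : Prop :=
  [/\ neighbors D1 D2, F D1 = F D2 & F D1 != set0].

(* fM D' V : the deterministic outlier test f_M(D', V) *)
Variable fM : dataset -> record -> bool.

Definition COE (D : dataset) (V : record) : {set context} :=
  [set C : context | (V \in restrict D C) && fM (restrict D C) V].

Variable V : record.

(* u takes the value -oo on non-matching contexts; we record only its finite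
   part u : dataset -> context -> R, and the sensitivity is measured over the
   contexts where both values are finite. *)
Definition sens_bound (u : dataset -> context -> R) (b : R) : Prop :=
  forall D1 D2 r, neighbors D1 D2 -> r \in COE D1 V -> r \in COE D2 V ->
    `|u D1 r - u D2 r| <= b.

Definition is_sensitivity (u : dataset -> context -> R) (Delta : R) : Prop :=
  sens_bound u Delta /\ forall b, sens_bound u b -> Delta <= b.

Variables (u : dataset -> context -> R) (Delta eps : R) (n : nat) (D : dataset).

Definition expmech (S : {set context}) (r : context) : R :=
  if r \in S then
    expR (eps * u D r / (2 * Delta)) /
      \sum_(r' in S) expR (eps * u D r' / (2 * Delta))
  else 0.

(* output pmf of the remaining run of the DFS loop (k = fuel, large enough
   that it never runs out), from state (stack, Visited); top of stack = head *)
Fixpoint dfs_run (k : nat) (stack : seq context) (vis : {set context})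
  : context -> R :=
  match k with
  | 0 => expmech vis
  | k'.+1 =>
    match stack with
    | [::] => expmech vis
    | C :: _ =>
      if (n < #|vis|)%N then expmech vis else
      let vis' := C |: vis in
      let Ch := [set C' | [&& connected C C', C' \in COE D V & C' \notin vis']] in
      if Ch == set0 then dfs_run k' (behead stack) vis'
      else fun r => \sum_(C' in Ch) expmech Ch C' * dfs_run k' (C' :: stack) vis' r
    end
  end.

End DFSSampling.

Definition DFS_sampling (R : realType) (m : nat) (dom : 'I_m -> nat)
  (fM : dataset R dom -> record R dom -> bool) (V : record R dom)
  (u : dataset R dom -> context dom -> R) (Delta eps : R) (n : nat)
  (CV : context dom) (D : dataset R dom) : context dom -> R :=
  dfs_run fM V u Delta eps n D (2 * #|{: context dom}|).+2 [:: CV] set0.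

(* Main.v *)
Require Import Defs.
From mathcomp Require Import all_boot all_order all_algebra.
From mathcomp Require Import reals.
From mathcomp.algebra_tactics Require Import ring lra.
From mathcomp.analysis Require Import sequences exp.
Import Order.TTheory GRing.Theory Num.Theory.
Local Open Scope ring_scope.

Lemma expmech_ratio (R : realType) m (dom : 'I_m -> nat) u (Delta eps : R) D1 D2
  (S : {set context dom}) (r : context dom) :
  0 < eps -> 0 < Delta ->
  (forall c, c \in S -> `|u D1 c - u D2 c| <= Delta) ->
  @expmech R m dom u Delta eps D1 S r <= expR eps * expmech u Delta eps D2 S r.
Proof.
move=> he hD hu; rewrite /expmech; case rS: (r \in S); last by rewrite mulr0.
set a := fun c => eps * u D1 c / (2 * Delta).
set b := fun c => eps * u D2 c / (2 * Delta).
have hab : forall c, c \in S -> a c <= b c + eps / 2 /\ b c <= a c + eps / 2.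
  move=> c cS; have := hu c cS; rewrite ler_norml => /andP[h1 h2].
  have k : 0 < eps / (2 * Delta) by apply: divr_gt0 => //; apply: mulr_gt0.
  have ea : a c = eps / (2 * Delta) * u D1 c by rewrite /a; field; rewrite gt_eqF.
  have eb : b c = eps / (2 * Delta) * u D2 c by rewrite /b; field; rewrite gt_eqF.
  have ee : eps / 2 = eps / (2 * Delta) * Delta by field; rewrite gt_eqF.
  rewrite ea eb ee -!mulrDr; split; rewrite ler_pM2l //; lra.
have Apos : 0 < \sum_(c in S) expR (a c).
  by rewrite (bigD1 r) //= ltr_pwDl ?expR_gt0 // sumr_ge0 // => i _; exact: ltW (expR_gt0 _).
have Bpos : 0 < \sum_(c in S) expR (b c).
  by rewrite (bigD1 r) //= ltr_pwDl ?expR_gt0 // sumr_ge0 // => i _; exact: ltW (expR_gt0 _).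
rewrite -/(a r) -/(b r).
have -> : (\sum_(r' in S) expR (eps * u D1 r' / (2 * Delta))) = \sum_(c in S) expR (a c) by [].
have -> : (\sum_(r' in S) expR (eps * u D2 r' / (2 * Delta))) = \sum_(c in S) expR (b c) by [].
have hB : \sum_(c in S) expR (b c) <= expR (eps / 2) * \sum_(c in S) expR (a c).
  rewrite mulr_sumr; apply: ler_sum => c cS; rewrite -expRD ler_expR addrC.
  by case: (hab c cS).
have hr : expR (a r) <= expR (eps / 2) * expR (b r).
  by rewrite -expRD ler_expR addrC; case: (hab r rS).
set A := \sum_(c in S) expR (a c) in Apos hB *.
set B := \sum_(c in S) expR (b c) in Bpos hB *.
have E2 : 0 < expR (eps / 2) := expR_gt0 _.
have EE : expR eps = expR (eps / 2) * expR (eps / 2) by rewrite -expRD; congr expR; field.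
have hA : B / expR (eps / 2) <= A by rewrite ler_pdivrMr // mulrC.
rewrite ler_pdivrMr //; apply: (le_trans hr).
apply: (@le_trans _ _ (expR eps * (expR (b r) / B) * (B / expR (eps / 2)))).
  rewrite EE le_eqVlt; apply/orP; left; apply/eqP; field; rewrite !gt_eqF //.
apply: ler_wpM2l => //; apply: mulr_ge0; first exact: ltW (expR_gt0 _).
by apply: divr_ge0; [exact: ltW (expR_gt0 _) | exact: ltW].
Qed.

Lemma expmech_ge0 (R : realType) m (dom : 'I_m -> nat) u (Delta eps : R) D
  (S : {set context dom}) (r : context dom) :
  0 <= @expmech R m dom u Delta eps D S r.
Proof.
rewrite /expmech; case: (r \in S) => //.
apply: divr_ge0; first exact: ltW (expR_gt0 _).
by apply: sumr_ge0 => i _; exact: ltW (expR_gt0 _).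
Qed.

Lemma dfs_ge0 (R : realType) m (dom : 'I_m -> nat) fM V u (Delta eps : R) n D k :
  forall st vis r, 0 <= @dfs_run R m dom fM V u Delta eps n D k st vis r.
Proof.
elim: k => [|k IH] st vis r /=; first exact: expmech_ge0.
case: st => [|C s]; first exact: expmech_ge0.
case: ifP => _; first exact: expmech_ge0.
case: ifP => _; first exact: IH.
by apply: sumr_ge0 => i _; apply: mulr_ge0; [exact: expmech_ge0 | exact: IH].
Qed.

Lemma exp_mono (R : realType) (eps x y : R) (N1 N2 : nat) :
  0 < eps -> (N1 <= N2)%N -> 0 <= y -> x <= expR (N1%:R * eps) * y ->
  x <= expR (N2%:R * eps) * y.
Proof.
move=> he hN hy h; apply: (le_trans h); apply: ler_wpM2r => //.
by rewrite ler_expR ler_pM2r // ler_nat.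
Qed.

Definition Mst (m : nat) (dom : 'I_m -> nat) (st : seq (context dom)) (vis : {set context dom}) : nat :=
  match st with [::] => #|vis| | C :: _ => #|vis| + (C \notin vis) end.
Arguments Mst {m dom}.
From mathcomp Require Import zify.

Lemma dfs_ratio (R : realType) m (dom : 'I_m -> nat) fM V u (Delta eps : R) n D1 D2 :
  0 < eps -> 0 < Delta ->
  COE fM D1 V = COE fM D2 V ->
  (forall c, c \in COE fM D1 V -> `|u D1 c - u D2 c| <= Delta) ->
  forall k (st : seq (context dom)) (vis : {set context dom}), all (mem (COE fM D1 V)) st -> vis \subset COE fM D1 V ->
  forall r : context dom, @dfs_run R m dom fM V u Delta eps n D1 k st vis r <=
    expR ((n + 2 - Mst st vis).+1%:R * eps) * dfs_run fM V u Delta eps n D2 k st vis r.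
Proof.
move=> he hD HC Hu k; elim: k => [|k IH] st vis Hst Hvis r.
  apply: (@exp_mono _ _ _ _ 1) => //; first exact: expmech_ge0.
  rewrite mul1r; apply: expmech_ratio => // c cv; apply: Hu; exact: (subsetP Hvis).
case: st Hst => [|C s] Hst.
  apply: (@exp_mono _ _ _ _ 1) => //; first exact: expmech_ge0.
  rewrite mul1r; apply: expmech_ratio => // c cv; apply: Hu; exact: (subsetP Hvis).
rewrite /=; case: ifP => hn.
  apply: (@exp_mono _ _ _ _ 1) => //; first exact: expmech_ge0.
  rewrite mul1r; apply: expmech_ratio => // c cv; apply: Hu; exact: (subsetP Hvis).
move: Hst => /= /andP[HC1 Hs].
have Hvis' : C |: vis \subset COE fM D1 V by rewrite subUset sub1set HC1 Hvis.
have hcard : #|C |: vis| = (#|vis| + (C \notin vis))%N by rewrite cardsU1 addnC.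
rewrite -HC.
case: ifP => hCh.
  apply: (@exp_mono _ _ _ _ (n + 2 - Mst s (C |: vis)).+1) => //.
  - case: s {Hs} => [|C2 s] /=; rewrite hcard; move: (#|vis| + (C \notin vis))%N => t; first by [].
    by rewrite ltnS leq_sub2l // leq_addr.
  - exact: dfs_ge0.
  by apply: IH.
rewrite mulr_sumr; apply: ler_sum => C' hC'.
have hC'2 := hC'; rewrite inE in hC'2; case/and3P: hC'2 => _ hC'c hC'v.
have -> : (n + 2 - (#|vis| + (C \notin vis))).+1 = ((n + 2 - Mst (C' :: C :: s) (C |: vis)).+1).+1.
  rewrite /= hC'v; move/negbT: hn; rewrite -leqNgt hcard; case: (C \notin vis) => /=; lia.
rewrite -addn1 natrD mulrDl expRD mul1r.
rewrite [X in _ <= X](_ : _ = (expR eps * expmech u Delta eps D2 [set C'0 | [&& connected C C'0, C'0 \in COE fM D1 V & C'0 \notin C |: vis]] C') * (expR ((n + 2 - Mst (C' :: C :: s) (C |: vis)).+1%:R * eps) * dfs_run fM V u Delta eps n D2 k (C' :: C :: s) (C |: vis) r)); last first.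
  by ring.
apply: ler_pM.
- exact: expmech_ge0.
- exact: dfs_ge0.
- apply: expmech_ratio => // c; rewrite inE => /and3P[_ hc _]; exact: Hu.
apply: IH => /=; last exact: Hvis'.
by rewrite hC'c HC1 Hs.
Qed.

Theorem theorem8 (R : realType) (m : nat) (dom : 'I_m -> nat)
  (fM : dataset R dom -> record R dom -> bool)
  (u : dataset R dom -> context dom -> R) (Delta eps1 : R) (n : nat)
  (V : record R dom) (CV : context dom) :
  0 < eps1 -> (1 <= n)%N ->
  is_sensitivity fM V u Delta -> 0 < Delta -> Delta <= 1 ->
  forall D1 D2 : dataset R dom,
    f_neighbors (fun D => COE fM D V) D1 D2 ->
    CV \in COE fM D1 V ->
    forall S : {set context dom},
      \sum_(r in S) DFS_sampling fM V u Delta eps1 n CV D1 r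
      <= expR ((2 * n + 2)%:R * eps1)
         * \sum_(r in S) DFS_sampling fM V u Delta eps1 n CV D2 r.
Proof.
move=> he hn [Hsens _] hD _ D1 D2 [Hnb HC _] HCV S.
have Hu : forall c, c \in COE fM D1 V -> `|u D1 c - u D2 c| <= Delta.
  by move=> c hc; apply: Hsens => //; rewrite -HC.
rewrite mulr_sumr; apply: ler_sum => r _.
apply: (@exp_mono _ _ _ _ (n + 2 - Mst [:: CV] set0).+1) => //.
- rewrite /= cards0 in_set0 /=; lia.
- exact: dfs_ge0.
apply: dfs_ratio => //=; first by rewrite HCV.
exact: sub0set.
Qed.
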